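(* Let $G$ be a 3-connected graph other than $K_{3,3}$, let $N$ be a maximal 3-chop of $G$, and let $\sigma$ be a splitting star of $N$ with torso $X$. If $X$ has at least five vertices, then $X$ is internally 4-connected.
   Context: All graphs are finite and simple. A separation of $G$ is an unordered pair $\{A,B\}$ with $A\cup B=V(G)$ and no edge between $A\setminus B$ and $B\setminus A$; its order is $|A\cap B|$; a 3-separation has order exactly 3; it is proper if $A\setminus B\ne\emptyset\ne B\setminus A$. For oriented separations, $(A,B)\le(C,D)$ iff $A\subseteq C$ and $B\supseteq D$. Two separations are nested if some orientations of them are $\le$-comparable; a nested set has pairwise nested elements. A star is a set $\sigma$ of oriented separations with $(A,B)\le(D,C)$ for all distinct $(A,B),(C,D)\in\sigma$; its bag is $\bigcap_{(A,B)\in\sigma}B$ ($=V(G)$ if $\sigma$ is empty); its torso is obtained from the subgraph induced on the bag by making each separator $A\cap B$, $(A,B)\in\sigma$, a clique. A splitting star of a set $S$ of separations is a star $\sigma$ of orientations of elements of $S$ such that every $\{C,D\}\in S$ has an orientation $\le$ some element of $\sigma$. A proper 3-separation $\{A,B\}$ of a 3-connected graph is claw-free if both $G[A]$ and $G[B]$ contain a cycle. A set of proper 3-separations is claw-freeable if it can be enumerated $s_0,\dots,s_n$ so that each $s_i$ is claw-free or shares at least two separator vertices with some $s_j$, $j<i$. A 3-chop of $G$ is a claw-freeable nested set of proper 3-separations of $G$; it is maximal if it is not a proper subset of another 3-chop of $G$. A graph is internally 4-connected if it is 3-connected, has more than four vertices, and every proper 3-separation $\{A,B\}$ has independent separator and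 satisfies $|A\setminus B|=1$ or $|B\setminus A|=1$. *)

(* Defs.v *)
(* finite simple graphs as symmetric irreflexive relations
   on a finType; all graph notions are relative to a vertex set V. *)
From mathcomp Require Import all_boot.
Set Implicit Arguments. Unset Strict Implicit. Unset Printing Implicit Defensive.

Section Graphs.
Variable T : finType.
Notation sep := ({set T} * {set T})%type.

Definition restrict (e : rel T) (S : {set T}) : rel T :=
  [rel x y | [&& x \in S, y \in S & e x y]].

Definition connected_on (e : rel T) (S : {set T}) : Prop :=
  forall x y, x \in S -> y \in S -> connect (restrict e S) x y.

Definition k_connected (k : nat) (V : {set T}) (e : rel T) : Prop :=
  k < #|V| /\ forall X : {set T}, X \subset V -> #|X| < k -> connected_on e (V :\: X).

Definition separation (V : {set T}) (e : rel T) (s : sep) : Prop :=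
  s.1 :|: s.2 = V /\
  forall x y, x \in s.1 :\: s.2 -> y \in s.2 :\: s.1 -> ~~ e x y.

Definition separator (s : sep) : {set T} := s.1 :&: s.2.

Definition proper_3sep (V : {set T}) (e : rel T) (s : sep) : Prop :=
  [/\ separation V e s, #|separator s| = 3,
      s.1 :\: s.2 != set0 & s.2 :\: s.1 != set0].

Definition le_sep (s t : sep) : bool := (s.1 \subset t.1) && (t.2 \subset s.2).
Definition flip (s : sep) : sep := (s.2, s.1).

Definition nested (s t : sep) : bool :=
  [|| le_sep s t, le_sep s (flip t), le_sep (flip s) t, le_sep (flip s) (flip t),
      le_sep t s, le_sep (flip t) s, le_sep t (flip s) | le_sep (flip t) (flip s)].

Definition has_cycle_in (e : rel T) (A : {set T}) : Prop :=
  exists c : seq T, [/\ 3 <= size c, uniq c, {subset c <= A} & cycle e c].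

Definition claw_free (e : rel T) (s : sep) : Prop :=
  proper_3sep [set: T] e s /\ has_cycle_in e s.1 /\ has_cycle_in e s.2.

(* A set of unordered separations is represented by the set N of all
   orientations of its elements; N must be closed under flipping. *)
Definition sym_set (N : {set sep}) : Prop := forall s, (s \in N) = (flip s \in N).

(* claw-freeable: N can be enumerated (by representatives, one orientation
   each) s_0, ..., s_n such that each s_i is claw-free or shares at least two
   separator vertices with some earlier s_j. *)
Definition claw_freeable (e : rel T) (N : {set sep}) : Prop :=
  exists l : seq sep,
    [/\ {subset l <= N},
        (forall s, s \in N -> (s \in l) || (flip s \in l)) &
        forall i, i < size l ->
          claw_free e (nth (set0, set0) l i) \/
          exists2 j, j < i &
            2 <= #|separator (nth (set0, set0) l i) :&: separator (nth (set0, set0) l j)|].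

Definition three_chop (e : rel T) (N : {set sep}) : Prop :=
  [/\ sym_set N,
      (forall s, s \in N -> proper_3sep [set: T] e s),
      (forall s t, s \in N -> t \in N -> nested s t) &
      claw_freeable e N].

Definition max_three_chop (e : rel T) (N : {set sep}) : Prop :=
  three_chop e N /\ forall N', three_chop e N' -> ~~ (N \proper N').

Definition star (sigma : {set sep}) : Prop :=
  forall s t, s \in sigma -> t \in sigma -> s != t -> le_sep s (flip t).

Definition bag (sigma : {set sep}) : {set T} := \bigcap_(s in sigma) s.2.

Definition torso_rel (e : rel T) (sigma : {set sep}) : rel T :=
  [rel x y | e x y ||
     ((x != y) && [exists s in sigma, (x \in separator s) && (y \in separator s)])].

Definition splitting_star (N sigma : {set sep}) : Prop :=
  [/\ sigma \subset N, star sigma &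
      forall t, t \in N -> exists2 s, s \in sigma & le_sep t s || le_sep (flip t) s].

Definition internally_4_connected (V : {set T}) (e : rel T) : Prop :=
  [/\ k_connected 3 V e, 4 < #|V| &
      forall s, proper_3sep V e s ->
        (forall x y, x \in separator s -> y \in separator s -> ~~ e x y) /\
        (#|s.1 :\: s.2| = 1 \/ #|s.2 :\: s.1| = 1)].

Definition isK33 (e : rel T) : Prop :=
  #|T| = 6 /\ exists P : {set T}, #|P| = 3 /\ forall x y, e x y = ((x \in P) != (y \in P)).

End Graphs.

(* Main.v *)
Require Import Defs.
From mathcomp Require Import all_boot zify.
From Stdlib Require Import Classical.
Set Implicit Arguments. Unset Strict Implicit. Unset Printing Implicit Defensive.


Section G1.
Variable T : finType.
Variable e : rel T.
Hypothesis esym : symmetric e.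
Hypothesis eirr : irreflexive e.

Lemma connect_ind' (R : rel T) (P : T -> Prop) x :
  P x -> (forall y z, P y -> R y z -> P z) -> forall y, connect R x y -> P y.
Proof.
move=> Px step y /connectP [p pp ->].
elim/last_ind: p pp => [|p z IH] //=.
rewrite rcons_path => /andP [pp r]; rewrite last_rcons.
exact: step (IH pp) r.
Qed.

Lemma leave (R : rel T) (P : {set T}) x y :
  connect R x y -> x \in P -> y \notin P ->
  exists y0 z, [/\ y0 \in P, z \notin P & R y0 z].
Proof.
move=> cxy xP yP.
have := @connect_ind' R (fun y => y \in P \/ exists y0 z, [/\ y0 \in P, z \notin P & R y0 z]) x
  (or_introl xP).
case/(_ _ y cxy)=> //; last by rewrite (negbTE yP).
move=> y1 z [y1P|H] r; last by right.
case zP: (z \in P); first by left.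
by right; exists y1, z; rewrite zP.
Qed.

Definition deg (W : {set T}) a := #|[set b in W | e a b]|.
Definition Esum (W : {set T}) := \sum_(a in W) deg W a.

Lemma size_le_card (W : {set T}) (s : seq T) : uniq s -> {subset s <= W} -> size s <= #|W|.
Proof.
move=> u sub; rewrite -(card_uniqP u); apply: subset_leq_card.
by apply/subsetP=> z zs; apply: sub.
Qed.

Lemma leaf_core (W : {set T}) x q : ~ has_cycle_in e W -> uniq (x :: q) ->
  {subset x :: q <= W} -> path e x q ->
  deg W x <= 1 \/ exists2 y, y \in W & (y \notin x :: q) && e x y.
Proof.
move=> nc u sub pq.
case: (leqP (deg W x) 1) => hd; first by left.
case: (boolP [exists y, [&& y \in W, y \notin x :: q & e x y]]).
  by case/existsP=> y /and3P [yW ynq exy]; right; exists y; rewrite ?ynq.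
rewrite negb_exists => /forallP allin.
exfalso; apply: nc.
have : 0 < #|[set b in W | e x b] :\ head x q|.
  move: hd; rewrite /deg (cardsD1 (head x q)); case: (_ \in _); lia.
case/card_gt0P=> y; rewrite !inE => /and3P [ynh yW exy].
have yq : y \in q.
  move: (allin y); rewrite yW exy /= andbT negbK inE => /orP [/eqP yx|//].
  by move: exy; rewrite yx eirr.
case/splitPr: yq pq u sub ynh => q1 q2.
case: q1 => [|z q1]; first by move=> _ _ _ /=; rewrite eqxx.
move=> pq u sub _.
exists [:: x, z & rcons q1 y]; split.
- by rewrite /= size_rcons.
- apply: (subseq_uniq _ u).
  have -> : [:: x, z & rcons q1 y] = [:: x, z & q1] ++ [:: y] by rewrite /= cats1.
  have -> : x :: z :: q1 ++ y :: q2 = ([:: x, z & q1] ++ [:: y]) ++ q2 by rewrite /= -catA.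
  exact: prefix_subseq.
- move=> w; rewrite !inE mem_rcons inE => hw; apply: sub; rewrite !inE mem_cat !inE.
  by case/or3P: hw => [->|->|/orP [->|->]]; rewrite ?orbT.
- move: pq; rewrite cat_path => /andP [p1 /andP [p2 _]].
  change (path e x (rcons (rcons (z :: q1) y) x)).
  by rewrite !rcons_path p1 p2 last_rcons esym.
Qed.

Lemma leaf_exists (W : {set T}) : ~ has_cycle_in e W -> forall x, x \in W ->
  exists2 w, w \in W & deg W w <= 1.
Proof.
move=> nc x0 x0W.
suff: forall n x q, #|W| - size (x :: q) <= n -> uniq (x :: q) -> {subset x :: q <= W} ->
   path e x q -> exists2 w, w \in W & deg W w <= 1.
  by move/(_ #|W| x0 [::]); apply=> //; [lia | move=> z; rewrite inE => /eqP ->].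
elim=> [|n IH] x q hs u sub pq.
- have hx : x \in W by apply: sub; rewrite inE eqxx.
  case: (leaf_core nc u sub pq) => [|[y yW /andP [ynq exy]]]; first by exists x.
  have : size (y :: x :: q) <= #|W|.
    apply: size_le_card; first by rewrite cons_uniq ynq u.
    by move=> z; rewrite inE => /orP [/eqP ->|/sub].
  move: hs => /=; lia.
- have hx : x \in W by apply: sub; rewrite inE eqxx.
  case: (leaf_core nc u sub pq) => [|[y yW /andP [ynq exy]]]; first by exists x.
  apply: (IH y (x :: q)).
  + move: hs => /=; lia.
  + by rewrite cons_uniq ynq u.
  + by move=> z; rewrite inE => /orP [/eqP ->|/sub].
  + by rewrite /= pq andbT esym.
Qed.

Lemma sum_bool (A : {set T}) (P : pred T) :
  \sum_(a in A) (P a : nat) = #|[set a in A | P a]|.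
Proof.
rewrite -sum1_card big_mkcond /= [RHS]big_mkcond /=.
by apply: eq_bigr => a _; rewrite !inE; case: (a \in A); case: (P a).
Qed.

Lemma degD1 (W : {set T}) w a : w \in W -> deg W a = e a w + deg (W :\ w) a.
Proof.
move=> wW; rewrite /deg (cardsD1 w) !inE wW /=; congr (_ + _).
by apply: eq_card => b; rewrite !inE; case: (b == w).
Qed.

Lemma EsumD1 (W : {set T}) w : w \in W -> Esum W = Esum (W :\ w) + 2 * deg W w.
Proof.
move=> wW; rewrite /Esum (big_setD1 _ wW) /=.
under eq_bigr => a _ do rewrite (degD1 a wW).
rewrite big_split /= sum_bool.
have -> : #|[set a in W :\ w | e a w]| = deg W w.
  rewrite (degD1 w wW) eirr /= /deg; apply: eq_card => b; by rewrite !inE esym.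
lia.
Qed.

Lemma forest_bound (W : {set T}) : ~ has_cycle_in e W -> W != set0 ->
  Esum W + 2 <= 2 * #|W|.
Proof.
move: {2}#|W| (erefl #|W|) => n; elim: n W => [|n IH] W hn nc.
  by move/eqP: hn; rewrite cards_eq0 => ->.
move=> Wn0; case/set0Pn: Wn0 => x xW.
case: (leaf_exists nc xW) => w wW hw.
rewrite (EsumD1 wW) (cardsD1 w W) wW.
case: (boolP (W :\ w == set0)) => [/eqP W0|W0].
  rewrite (degD1 w wW) W0 /Esum big_set0 eirr cards0 /deg.
  have -> : #|[set b in set0 | e w b]| = 0.
    by apply: eq_card0 => b; rewrite !inE.
  by [].
have := IH (W :\ w).
have hn' : #|W :\ w| = n by move: (cardsD1 w W); rewrite wW hn; lia.
have nc' : ~ has_cycle_in e (W :\ w).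
  move=> [c [h1 h2 h3 h4]]; apply: nc; exists c; split => // z /h3; rewrite inE => /andP [].
  by [].
move=> /(_ hn' nc' W0); lia.
Qed.

Lemma sep_nbr (V : {set T}) (u : {set T} * {set T}) x y : separation V e u ->
  x \in u.1 :\: u.2 -> e x y -> y \in V -> y \in u.1.
Proof.
case=> hU hs xD exy yV; apply/negPn/negP => yn1.
have : y \in u.2 :\: u.1.
  by rewrite inE yn1 /=; move: yV; rewrite -hU inE (negbTE yn1).
by move/(hs _ _ xD); rewrite exy.
Qed.

Lemma deg3 : k_connected 3 [set: T] e -> forall a, 3 <= #|[set b | e a b]|.
Proof.
case=> hT hc a; rewrite leqNgt; apply/negP => hN.
have : #|[set b | e a b] :|: [set a]| < #|[set: T]|.
  by apply: (leq_ltn_trans (leq_card_setU _ _)); rewrite cards1; lia.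
move=> hlt.
have : 0 < #|~: ([set b | e a b] :|: [set a])| by rewrite cardsCs setCK -cardsT; lia.
case/card_gt0P => c; rewrite !inE negb_or => /andP [nac nca].
have := hc [set b | e a b] (subsetT _) hN a c.
rewrite !inE eirr nac => /(_ isT isT) cac.
have := leave (P := [set a]) cac; rewrite !inE eqxx nca => /(_ isT isT).
case=> y0 [z [y0a za r]].
move: y0a r; rewrite inE => /eqP ->; rewrite /= => /and3P [_].
by rewrite !inE andbT => /negbTE ->.
Qed.

Lemma sep_has_nbr (u : {set T} * {set T}) x : k_connected 3 [set: T] e ->
  proper_3sep [set: T] e u -> x \in separator u -> exists2 y, y \in u.1 :\: u.2 & e x y.
Proof.
case=> hT hc [hs h3 /set0Pn [d dD] /set0Pn [b bB]] xS.
have hZ : #|separator u :\ x| < 3 by move: (cardsD1 x (separator u)); rewrite xS h3; lia.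
have nZ : forall z, z \in u.1 :\: u.2 -> z \notin separator u :\ x.
  by move=> z; rewrite /separator !inE; case: (z \in u.1); case: (z \in u.2) => //=; rewrite andbF.
have nZ' : forall z, z \in u.2 :\: u.1 -> z \notin separator u :\ x.
  by move=> z; rewrite /separator !inE; case: (z \in u.1); case: (z \in u.2) => //=; rewrite andbF.
have := hc _ (subsetT _) hZ d b; rewrite [d \in _]in_setD [b \in _]in_setD !in_setT (nZ _ dD) (nZ' _ bB) => /(_ isT isT) cdb.
case: (leave cdb dD) => [|y0 [z [y0D zD r]]].
  by move: bB; rewrite !inE => /andP [/negbTE -> _]; rewrite andbF.
move: r => /= /and3P [_]; rewrite !inE /= => zZ ey0z.
have z1 : z \in u.1 by apply: (sep_nbr hs y0D ey0z); rewrite inE.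
have z2 : z \in u.2 by move: zD; rewrite inE z1 andbT negbK.
have zx : z == x by move: zZ; rewrite z1 z2 !andbT negbK.
by exists y0 => //; rewrite -(eqP zx) esym.
Qed.

Lemma claw (u : {set T} * {set T}) : k_connected 3 [set: T] e -> proper_3sep [set: T] e u ->
  ~ has_cycle_in e u.1 ->
  #|u.1 :\: u.2| <= 1 /\ (forall x y, x \in separator u -> y \in separator u -> ~~ e x y).
Proof.
move=> kc pu nc; have [hs h3 Dn0 Bn0] := pu.
have degD : forall a, a \in u.1 :\: u.2 -> 3 <= deg u.1 a.
  move=> a aD; apply: (leq_trans (deg3 kc a)); apply: subset_leq_card.
  by apply/subsetP => b; rewrite !inE => eab; rewrite eab andbT (sep_nbr hs aD eab) ?inE.
have degS : forall a, a \in separator u -> 1 <= deg u.1 a.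
  move=> a aS; case: (sep_has_nbr kc pu aS) => y yD eay.
  apply/card_gt0P; exists y; rewrite !inE eay andbT.
  by move: yD; rewrite inE => /andP [].
have c1 : #|u.1| = #|u.1 :\: u.2| + #|separator u|.
  by rewrite -(cardsID u.2 u.1) /separator addnC.
have lo : #|separator u| + 3 * #|u.1 :\: u.2| <= Esum u.1.
  rewrite /Esum (bigID (fun a => a \in u.2)) /=; apply: leq_add.
    rewrite -sum1_card; apply: (@leq_trans (\sum_(a in separator u) deg u.1 a)).
      by apply: leq_sum => a /degS.
    by rewrite [X in _ <= X](eq_bigl (fun a => a \in separator u)) // => a; rewrite !inE.
  rewrite mulnC -sum_nat_const; apply: (@leq_trans (\sum_(a in u.1 :\: u.2) deg u.1 a)).
    by apply: leq_sum => a /degD.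
  by rewrite [X in _ <= X](eq_bigl (fun a => a \in u.1 :\: u.2)) // => a; rewrite !inE andbC.
have u1n0 : u.1 != set0.
  case/set0Pn: Dn0 => d; rewrite inE => /andP [_ d1]; by apply/set0Pn; exists d.
have fb := forest_bound nc u1n0.
have hD : #|u.1 :\: u.2| <= 1 by lia.
split => // x y xS yS; apply/negP => exy.
case/set0Pn: Dn0 => v vD.
have Nv : [set b in u.1 | e v b] \subset separator u.
  apply/subsetP => b; rewrite !inE => /andP [b1 evb]; rewrite b1 /=.
  apply/negPn/negP => b2.
  have bD : b \in u.1 :\: u.2 by rewrite inE b1 b2.
  by move: evb; rewrite ((card_le1_eqP hD) b v bD vD) eirr.
have NvS : [set b in u.1 | e v b] = separator u.
  by apply/eqP; rewrite eqEcard Nv h3 degD.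
have evx : e v x by move: xS; rewrite -NvS inE => /andP [].
have evy : e v y by move: yS; rewrite -NvS inE => /andP [].
have vnS : forall z, z \in separator u -> v != z.
  move=> z; rewrite /separator !inE => /andP [_ z2]; apply/eqP => vz.
  by move: vD; rewrite vz inE z2.
apply: nc; exists [:: v; x; y]; split => //.
- rewrite /= !inE !negb_or (vnS _ xS) (vnS _ yS) /= andbT.
  by apply/eqP => xy; move: exy; rewrite xy eirr.
- move=> z; rewrite !inE => /or3P [] /eqP ->.
  + by move: vD; rewrite inE => /andP [].
  + by move: xS; rewrite /separator inE => /andP [].
  + by move: yS; rewrite /separator inE => /andP [].
- by rewrite /= evx exy esym evy.
Qed.
End G1.


Section G2.
Variable T : finType.
Variable e : rel T.
Hypothesis esym : symmetric e.
Hypothesis eirr : irreflexive e.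
Variables N sigma : {set {set T} * {set T}}.
Hypothesis HN : forall s, s \in N -> proper_3sep [set: T] e s.
Hypothesis hss : splitting_star N sigma.

Local Notation Bg := (bag sigma).
Local Notation tor := (torso_rel e sigma).

Lemma sig_N s : s \in sigma -> s \in N.
Proof. by case: hss => /subsetP h _ _ /h. Qed.

Lemma sig_sep s : s \in sigma -> separation [set: T] e s.
Proof. by move/sig_N/HN; case. Qed.

Lemma star_le s t : s \in sigma -> t \in sigma -> s != t -> s.1 \subset t.2.
Proof. by case: hss => _ hst _ hs ht hne; case/andP: (hst _ _ hs ht hne). Qed.

Lemma bag_sub s : s \in sigma -> Bg \subset s.2.
Proof. by move=> hs; apply: (bigcap_inf s). Qed.

Lemma sep_bag s : s \in sigma -> separator s \subset Bg.
Proof.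
move=> hs; apply/subsetP => x; rewrite /separator inE => /andP [x1 x2].
apply/bigcapP => t ht; case: (eqVneq s t) => [<-//|hne].
by apply: (subsetP (star_le hs ht hne)).
Qed.

Lemma in_sep s x : s \in sigma -> x \in s.1 -> x \in Bg -> x \in separator s.
Proof. by move=> hs x1 xb; rewrite /separator inE x1 (subsetP (bag_sub hs)). Qed.

Lemma out_bag x : x \notin Bg -> exists2 s, s \in sigma & x \in s.1 :\: s.2.
Proof.
move=> xb; have : ~ (forall s, s \in sigma -> x \in s.2) by move=> h; case/negP: xb; apply/bigcapP.
move=> h; case: (boolP [exists s in sigma, x \notin s.2]).
  case/existsP => s /andP [hs xs2]; exists s => //; rewrite inE xs2 /=.
  by case: (sig_sep hs) => hU _; move: (in_setT x); rewrite -hU inE (negbTE xs2) orbF.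
rewrite negb_exists => /forallP hf; exfalso; apply: h => s hs.
by move: (hf s); rewrite hs negbK.
Qed.

Lemma tor_sep s a b : s \in sigma -> a \in separator s -> b \in separator s -> a != b -> tor a b.
Proof.
move=> hs ha hb hab; rewrite /torso_rel /= hab /=; apply/orP; right.
by apply/existsP; exists s; rewrite hs ha hb.
Qed.

Lemma torso_conn Z x y : x \in Bg :\: Z -> y \in Bg ->
  connect (restrict e ([set: T] :\: Z)) x y -> connect (restrict tor (Bg :\: Z)) x y.
Proof.
move=> xBZ yB cxy.
pose C := connect (restrict tor (Bg :\: Z)) x.
pose P := fun y => (y \in Bg -> C y) /\
   (forall s, s \in sigma -> y \in s.1 :\: s.2 -> exists2 w, w \in separator s :\: Z & C w).
have P0 : P x.
  split; first by move=> _; exact: connect0.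
  move=> s hs; rewrite inE => /andP [xn2 _].
  by move: xBZ; rewrite inE => /andP [_ xb]; case/negP: xn2; apply: (subsetP (bag_sub hs)).
suff step : forall a b, P a -> restrict e ([set: T] :\: Z) a b -> P b.
  by case: (@connect_ind' T (restrict e ([set: T] :\: Z)) P x P0 step y cxy) => /(_ yB).
move=> a b [Pa1 Pa2] /= /and3P [aZ bZ eab].
have aZ' : a \notin Z by move: aZ; rewrite inE => /andP [].
have bZ' : b \notin Z by move: bZ; rewrite inE => /andP [].
case: (boolP (a \in Bg)) => aB.
  split.
    move=> bB; apply: connect_trans (Pa1 aB) (connect1 _).
    by rewrite /restrict /= !inE aZ' bZ' aB bB /= /torso_rel /= eab.
  move=> s hs bD; exists a; last exact: Pa1.
  rewrite inE aZ' in_sep //; apply: (sep_nbr (sig_sep hs) bD); rewrite ?inE // esym //.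
case: (out_bag aB) => s0 hs0 aD0.
case: (Pa2 s0 hs0 aD0) => w wS Cw.
split.
  move=> bB; have bS : b \in separator s0.
    by apply: in_sep => //; apply: (sep_nbr (sig_sep hs0) aD0 eab); rewrite inE.
  have wSS : w \in separator s0 by move: wS; rewrite inE => /andP [].
  case: (eqVneq w b) => [<-//|wb].
  apply: connect_trans Cw (connect1 _).
  have wZ : w \notin Z by move: wS; rewrite inE => /andP [].
  rewrite /restrict /= !inE wZ bZ' (subsetP (sep_bag hs0) _ wSS) bB /=.
  exact: tor_sep hs0 wSS bS wb.
move=> s hs bD; apply: Pa2 => //.
have a1 : a \in s.1 by apply: (sep_nbr (sig_sep hs) bD); rewrite ?inE // esym.
rewrite inE a1 andbT; apply/negP => a2.
by case/negP: aB; apply: (subsetP (sep_bag hs)); rewrite /separator inE a1 a2.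
Qed.


Section Ext.
Variable s0 : {set T} * {set T}.
Hypothesis ps0 : proper_3sep Bg tor s0.

Definition sigA := [set s in sigma | separator s \subset s0.1].
Definition Ap := s0.1 :|: \bigcup_(s in sigA) s.1.
Definition Bp := s0.2 :|: \bigcup_(s in sigma :\: sigA) s.1.

Lemma s0U : s0.1 :|: s0.2 = Bg.
Proof. by case: ps0 => [[]]. Qed.

Lemma s01B x : x \in s0.1 -> x \in Bg.
Proof. by move=> h; rewrite -s0U inE h. Qed.
Lemma s02B x : x \in s0.2 -> x \in Bg.
Proof. by move=> h; rewrite -s0U inE h orbT. Qed.

Lemma clique s : s \in sigma -> s \notin sigA -> separator s \subset s0.2.
Proof.
move=> hs; rewrite inE hs /= => /subsetPn [y yS y1].
have y2 : y \in s0.2.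
  by move: (subsetP (sep_bag hs) _ yS); rewrite -s0U inE (negbTE y1).
apply/subsetP => x xS; apply/negPn/negP => x2.
have x1 : x \in s0.1 by move: (subsetP (sep_bag hs) _ xS); rewrite -s0U inE (negbTE x2) orbF.
case: ps0 => [[_ hsep] _ _ _].
have := hsep x y; rewrite !inE x1 x2 y1 y2 => /(_ isT isT).
rewrite (tor_sep hs xS yS) //; apply/eqP => xy; by move: x2; rewrite xy y2.
Qed.

Lemma inA_s x : x \in Ap -> x \notin s0.1 -> exists2 s, s \in sigA & x \in s.1.
Proof. by rewrite /Ap inE => /orP [->//|/bigcupP]. Qed.
Lemma inB_s x : x \in Bp -> x \notin s0.2 -> exists2 s, s \in sigma :\: sigA & x \in s.1.
Proof. by rewrite /Bp inE => /orP [->//|/bigcupP]. Qed.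

Lemma L2 x : x \in Ap -> x \in Bg -> x \in s0.1.
Proof.
move=> xA xB; apply/negPn/negP => x1; case: (inA_s xA x1) => s.
rewrite inE => /andP [hs sS] xs; apply/negP: x1; rewrite negbK.
exact: (subsetP sS) (in_sep hs xs xB).
Qed.

Lemma L3 x : x \in Bp -> x \in Bg -> x \in s0.2.
Proof.
move=> xA xB; apply/negPn/negP => x1; case: (inB_s xA x1) => s.
rewrite inE => /andP [hsA hs] xs; apply/negP: x1; rewrite negbK.
exact: (subsetP (clique hs hsA)) (in_sep hs xs xB).
Qed.

Lemma L4 : Ap :|: Bp = [set: T].
Proof.
apply/eqP; rewrite eqEsubset subsetT /=; apply/subsetP => x _.
case: (boolP (x \in Bg)) => xB.
  by move: xB; rewrite -s0U /Ap /Bp !inE => /orP [->|->]; rewrite ?orbT.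
case: (out_bag xB) => s hs; rewrite inE => /andP [_ x1].
case: (boolP (s \in sigA)) => hA.
  by rewrite /Ap !inE; apply/orP; left; apply/orP; right; apply/bigcupP; exists s.
by rewrite /Bp !inE; apply/orP; right; apply/orP; right; apply/bigcupP; exists s; rewrite // inE hA.
Qed.

Lemma L5 : Ap :&: Bp = s0.1 :&: s0.2.
Proof.
apply/setP => x; rewrite !in_setI; apply/andP/andP => [[xA xBp]|[x1 x2]].
  case: (boolP (x \in Bg)) => xB; first by rewrite (L2 xA xB) (L3 xBp xB).
  have x1 : x \notin s0.1 by apply: contra xB; apply: s01B.
  have x2 : x \notin s0.2 by apply: contra xB; apply: s02B.
  case: (inA_s xA x1) => s hsA xs; move: (hsA); rewrite inE => /andP [hs _].
  case: (inB_s xBp x2) => t; rewrite in_setD => /andP [htA ht] xt.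
  have hst : s != t by apply/eqP => st; move: htA; rewrite -st hsA.
  case/negP: xB; apply: (subsetP (sep_bag ht)); rewrite /separator inE xt /=.
  exact: (subsetP (star_le hs ht hst)).
by rewrite /Ap /Bp !inE x1 x2.
Qed.


Lemma s0A x : x \in s0.1 -> x \in Ap.
Proof. by move=> h; rewrite /Ap in_setU h. Qed.
Lemma s0B x : x \in s0.2 -> x \in Bp.
Proof. by move=> h; rewrite /Bp in_setU h. Qed.

Lemma outside_side x y : x \notin Bg -> e x y ->
  (x \in Ap -> x \notin Bp -> y \in Ap) /\ (x \in Bp -> x \notin Ap -> y \in Bp).
Proof.
move=> xB exy; case: (out_bag xB) => s hs xD.
have y1 : y \in s.1 by apply: (sep_nbr (sig_sep hs) xD exy); rewrite inE.
have x1 : x \in s.1 by move: xD; rewrite inE => /andP [].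
case: (boolP (s \in sigA)) => hA.
  have hxA : x \in Ap by rewrite /Ap in_setU; apply/orP; right; apply/bigcupP; exists s.
  have hyA : y \in Ap by rewrite /Ap in_setU; apply/orP; right; apply/bigcupP; exists s.
  by split => // _; rewrite hxA.
have hxB : x \in Bp by rewrite /Bp in_setU; apply/orP; right; apply/bigcupP; exists s; rewrite // in_setD hA.
have hyB : y \in Bp by rewrite /Bp in_setU; apply/orP; right; apply/bigcupP; exists s; rewrite // in_setD hA.
by split => // _; rewrite hxB.
Qed.

Lemma L6 : separation [set: T] e (Ap, Bp).
Proof.
split; first exact: L4.
move=> x y /=; rewrite !in_setD => /andP [xnB xA] /andP [ynA yB]; apply/negP => exy.
case: (boolP (x \in Bg)) => xBg.
  case: (boolP (y \in Bg)) => yBg.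
    have x1 := L2 xA xBg; have y2 := L3 yB yBg.
    have x2 : x \notin s0.2 by apply: contra xnB; apply: s0B.
    have y1 : y \notin s0.1 by apply: contra ynA; apply: s0A.
    case: ps0 => [[_ hsep] _ _ _].
    have := hsep x y; rewrite !in_setD x1 x2 y1 y2 => /(_ isT isT).
    by rewrite /torso_rel /= exy.
  have := (outside_side yBg (_ : e y x)).2 yB ynA; rewrite esym => /(_ exy).
  by rewrite (negbTE xnB).
have := (outside_side xBg exy).1 xA xnB.
by rewrite (negbTE ynA).
Qed.

Lemma sepAB : separator (Ap, Bp) = separator s0.
Proof. exact: L5. Qed.

Lemma D1 : s0.1 :\: s0.2 \subset Ap :\: Bp.
Proof.
apply/subsetP => x; rewrite !in_setD => /andP [x2 x1]; rewrite s0A // andbT.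
by apply: contra x2 => xB; apply: L3 => //; apply: s01B.
Qed.

Lemma D2 : s0.2 :\: s0.1 \subset Bp :\: Ap.
Proof.
apply/subsetP => x; rewrite !in_setD => /andP [x1 x2]; rewrite s0B // andbT.
by apply: contra x1 => xA; apply: L2 => //; apply: s02B.
Qed.

Lemma L7 : proper_3sep [set: T] e (Ap, Bp).
Proof.
case: ps0 => _ h3 n1 n2; split; first exact: L6.
- by rewrite sepAB.
- case/set0Pn: n1 => x /(subsetP D1) xD; by apply/set0Pn; exists x.
- case/set0Pn: n2 => x /(subsetP D2) xD; by apply/set0Pn; exists x.
Qed.

Lemma le_trans_sep (a b c : {set T} * {set T}) : le_sep a b -> le_sep b c -> le_sep a c.
Proof.
rewrite /le_sep => /andP [h1 h2] /andP [h3 h4]; apply/andP; split; [exact: subset_trans h1 h3 | exact: subset_trans h4 h2].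
Qed.

Lemma L8 s : s \in sigma -> if s \in sigA then le_sep s (Ap, Bp) else le_sep s (Bp, Ap).
Proof.
move=> hs; case: ifP => hA; apply/andP; split => /=.
- by apply/subsetP => x xs; rewrite /Ap in_setU; apply/orP; right; apply/bigcupP; exists s.
- rewrite /Bp subUset; apply/andP; split.
    by apply: subset_trans (bag_sub hs); apply/subsetP => x; apply: s02B.
  apply/bigcupsP => t; rewrite in_setD => /andP [htA ht]; apply: star_le => //.
  by apply/eqP => ts; move: htA; rewrite ts hA.
- apply/subsetP => x xs; rewrite /Bp in_setU; apply/orP; right; apply/bigcupP; exists s => //.
  by rewrite in_setD hA.
- rewrite /Ap subUset; apply/andP; split.
    by apply: subset_trans (bag_sub hs); apply/subsetP => x; apply: s01B.
  apply/bigcupsP => t htA; have ht : t \in sigma by move: htA; rewrite inE => /andP [].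
  apply: star_le => //; by apply/eqP => ts; move: htA; rewrite ts hA.
Qed.

Lemma nested_sym (a b : {set T} * {set T}) : nested a b = nested b a.
Proof.
rewrite /nested.
by case: (le_sep a b); case: (le_sep a (flip b)); case: (le_sep (flip a) b);
  case: (le_sep (flip a) (flip b)); case: (le_sep b a); case: (le_sep (flip b) a);
  case: (le_sep b (flip a)); case: (le_sep (flip b) (flip a)).
Qed.

Lemma L9 t : t \in N -> nested t (Ap, Bp).
Proof.
move=> ht; case: hss => _ _ /(_ t ht) [s hs /orP hle].
have := L8 hs; case: ifP => _ hsAB; rewrite /nested.
- case: hle => h; first by rewrite (le_trans_sep h hsAB).
  by rewrite (le_trans_sep h hsAB) !orbT.
- case: hle => h; first by rewrite (le_trans_sep h hsAB) orbT.
  by rewrite (le_trans_sep h hsAB) !orbT.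
Qed.

Lemma L10 : (Ap, Bp) \notin N.
Proof.
apply/negP => hin; case: hss => _ _ /(_ _ hin) [s hs /orP [] /andP [/= h1 h2]].
- case: ps0 => _ _ /set0Pn [x xD] _; move: (xD); rewrite in_setD => /andP [x2 x1].
  have xs1 : x \in s.1 by apply: (subsetP h1); apply: s0A.
  have xS := in_sep hs xs1 (s01B x1).
  have xs2 : x \in s.2 by move: xS; rewrite /separator inE => /andP [].
  by case/negP: x2; apply: L3 (subsetP h2 _ xs2) (s01B x1).
- case: ps0 => _ _ _ /set0Pn [x xD]; move: (xD); rewrite in_setD => /andP [x1 x2].
  have xs1 : x \in s.1 by apply: (subsetP h1); apply: s0B.
  have xS := in_sep hs xs1 (s02B x2).
  have xs2 : x \in s.2 by move: xS; rewrite /separator inE => /andP [].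
  by case/negP: x1; apply: L2 (subsetP h2 _ xs2) (s02B x2).
Qed.
End Ext.
End G2.


Lemma flipK (T : finType) (s : {set T} * {set T}) : flip (flip s) = s.
Proof. by case: s. Qed.

Lemma proper_flip (T : finType) (e : rel T) V s : symmetric e ->
  proper_3sep V e s -> proper_3sep V e (flip s).
Proof.
move=> esym [[hU hs] h3 n1 n2]; split => //=.
- split; first by rewrite /= setUC.
  by move=> x y /= hx hy; rewrite esym; apply: hs.
- by rewrite /separator /= setIC.
Qed.

Lemma nested_flip (T : finType) (a b : {set T} * {set T}) : nested a b -> nested a (flip b).
Proof.
rewrite /nested !flipK.
by case: (le_sep a b); case: (le_sep a (flip b)); case: (le_sep (flip a) b);
  case: (le_sep (flip a) (flip b)); case: (le_sep b a); case: (le_sep (flip b) a);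
  case: (le_sep b (flip a)); case: (le_sep (flip b) (flip a)).
Qed.

Lemma nested_refl (T : finType) (a : {set T} * {set T}) : nested a a.
Proof. by rewrite /nested /le_sep !subxx. Qed.

Lemma nested_reflf (T : finType) (a : {set T} * {set T}) : nested a (flip a).
Proof. by rewrite /nested flipK /le_sep !subxx !orbT. Qed.

Lemma extend_chop (T : finType) (e : rel T) (N : {set {set T} * {set T}}) u :
  symmetric e -> three_chop e N -> proper_3sep [set: T] e u ->
  (forall t, t \in N -> nested t u) ->
  (claw_free e u \/ exists2 t, t \in N & 2 <= #|separator u :&: separator t|) ->
  three_chop e (N :|: [set u; flip u]).
Proof.
move=> esym [Nsym Nprop Nnest [l [lsub lcov lcond]]] pu nu H.
have flipeq : forall s, (flip s == u) = (s == flip u).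
  by move=> s; apply/eqP/eqP => [<-|->]; rewrite flipK.
split.
- move=> s; rewrite !inE -Nsym.
  have f1 : (flip s == u) = (s == flip u) by apply/eqP/eqP => [<-|->]; rewrite flipK.
  have f2 : (flip s == flip u) = (s == u) by apply/eqP/eqP => [h|->//]; rewrite -[s]flipK h flipK.
  by rewrite f1 f2; case: (s == u); case: (s == flip u); rewrite ?orbT ?orbF.
- move=> s; rewrite !inE => /orP [/Nprop //|/orP [/eqP ->//|/eqP ->]].
  exact: proper_flip.
- move=> s t; rewrite !inE => /orP [hs|/orP [/eqP ->|/eqP ->]] /orP [ht|/orP [/eqP ->|/eqP ->]].
  + exact: Nnest.
  + exact: nu.
  + exact/nested_flip/nu.
  + by rewrite nested_sym; apply: nu.
  + exact: nested_refl.
  + exact: nested_reflf.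
  + by rewrite nested_sym; apply/nested_flip/nu.
  + by rewrite nested_sym; apply: nested_reflf.
  + exact: nested_refl.
- exists (rcons l u); split.
  + move=> z; rewrite mem_rcons inE => /orP [/eqP ->|/lsub hz]; rewrite !inE ?eqxx ?orbT //.
    by rewrite hz.
  + move=> s; rewrite !inE !mem_rcons !inE => /orP [/lcov /orP [->|->]|/orP [/eqP ->|/eqP ->]];
      rewrite ?eqxx ?flipK ?eqxx ?orbT //.
  + move=> i; rewrite size_rcons ltnS leq_eqVlt => /orP [/eqP ->|hi].
      rewrite nth_rcons ltnn eqxx.
      case: H => [hc|[t ht h2]]; first by left.
      right; case/orP: (lcov t ht) => htl.
        exists (index t l); first by rewrite index_mem.
        by rewrite nth_rcons index_mem htl nth_index.
      exists (index (flip t) l); first by rewrite index_mem.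
      rewrite nth_rcons index_mem htl nth_index //.
      by have -> : separator (flip t) = separator t by rewrite /separator /= setIC.
    rewrite nth_rcons hi; case: (lcond i hi) => [hc|[j hj h2]]; first by left.
    right; exists j => //; by rewrite nth_rcons (ltn_trans hj hi).
Qed.

Theorem mainTheorem7 (T : finType) (e : rel T) :
  symmetric e -> irreflexive e ->
  k_connected 3 [set: T] e -> ~ isK33 e ->
  forall N : {set {set T} * {set T}}, max_three_chop e N ->
  forall sigma : {set {set T} * {set T}}, splitting_star N sigma ->
  5 <= #|bag sigma| ->
  internally_4_connected (bag sigma) (torso_rel e sigma).
Proof.
move=> esym eirr kc _ N [chN Nmax] sigma hss h5.
have HN : forall s, s \in N -> proper_3sep [set: T] e s by case: chN.
split.
- split; first by lia.
  move=> X _ hX x y xX yX; apply: (torso_conn esym HN hss xX) => //.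
    by move: yX; rewrite inE => /andP [].
  case: kc => _ kc; apply: (kc X (subsetT _) hX); rewrite !inE.
    by move: xX; rewrite inE => /andP [->].
  by move: yX; rewrite inE => /andP [->].
- by lia.
move=> s0 ps0.
set u := (Ap sigma s0, Bp sigma s0).
have pu : proper_3sep [set: T] e u := L7 esym HN hss ps0.
have key : ~ (claw_free e u \/ exists2 t, t \in N & 2 <= #|separator u :&: separator t|).
  move=> H; have ch' := extend_chop esym chN pu (fun t ht => L9 hss ps0 ht) H.
  case/negP: (Nmax _ ch'); apply/properP; split; first exact: subsetUl.
  by exists u; rewrite ?inE ?eqxx ?orbT // (L10 hss ps0).
have nsh : forall t, t \in N -> #|separator u :&: separator t| < 2.
  by move=> t ht; rewrite ltnNge; apply/negP => h; apply: key; right; exists t.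
have ncf : ~ (has_cycle_in e u.1 /\ has_cycle_in e u.2).
  by move=> [c1 c2]; apply: key; left.
have sepE := sepAB hss ps0.
have indep : (forall x y, x \in separator u -> y \in separator u -> ~~ e x y) ->
    forall x y, x \in separator s0 -> y \in separator s0 -> ~~ torso_rel e sigma x y.
  move=> ind x y xS yS; rewrite /torso_rel /= negb_or; rewrite -sepE in xS yS.
  rewrite ind //=; apply/negP => /andP [xy /existsP [s /and3P [hs xs ys]]].
  have := nsh s (sig_N hss hs); rewrite ltnNge => /negP; apply.
  have -> : 2 = #|[set x; y]| by rewrite cards2 xy.
  apply: subset_leq_card; apply/subsetP => z; rewrite in_set2 => /orP [] /eqP ->; rewrite in_setI ?xS ?xs ?yS ?ys //.
case: (classic (has_cycle_in e u.1)) => c1.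
  have c2 : ~ has_cycle_in e u.2 by move=> c2; apply: ncf.
  have [hD ind0] := claw esym eirr kc (proper_flip esym pu) c2.
  split; first by apply: indep => x y; rewrite /separator /= setIC; apply: ind0.
  right; have [_ _ _ n2] := ps0; apply/eqP; rewrite eqn_leq card_gt0 n2 andbT.
  apply: leq_trans hD; apply: subset_leq_card; change (s0.2 :\: s0.1 \subset Bp sigma s0 :\: Ap sigma s0); first [exact: (D2 hss ps0) | exact: (D2 ps0)].
have [hD ind0] := claw esym eirr kc pu c1.
split; first exact: indep ind0.
left; have [_ _ n1 _] := ps0; apply/eqP; rewrite eqn_leq card_gt0 n1 andbT.
apply: leq_trans hD; apply: subset_leq_card; exact: (D1 hss ps0).
Qed.
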